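(* In a complete graph with $n$ nodes (with arbitrary thresholds $t_I,t_E$ and budget $\beta$), the MES problem can be solved in $O(n)$ time.
   Context: Let $G=(V,E)$ be a graph, $N(v)$ the neighborhood of $v$, $d(v)=|N(v)|$, and $t_I,t_E:V\to\{0,1,2,\dots\}$ thresholds with $0\le t_I(v)\le t_E(v)\le d(v)+1$. For $S\subseteq V$: $\mathsf{Evg}[S,0]=\mathsf{Inf}[S,0]=S$, and for $\tau\ge1$, $\mathsf{Evg}[S,\tau]=\mathsf{Evg}[S,\tau-1]\cup\{u:|N(u)\cap\mathsf{Evg}[S,\tau-1]|\ge t_E(u)\}$, $\mathsf{Inf}[S,\tau]=\mathsf{Inf}[S,\tau-1]\cup\{u:|N(u)\cap\mathsf{Evg}[S,\tau-1]|\ge t_I(u)\}$; at the first $\rho$ with $\mathsf{Evg}[S,\rho]=\mathsf{Evg}[S,\rho-1]$ set $\mathsf{Inf}[S]=\mathsf{Inf}[S,\rho]$. The MES problem: given $G$, $t_I$, $t_E$ and budget $\beta$, find $S\subseteq V$ with $|S|\le\beta$ maximizing $|\mathsf{Inf}[S]|$. *)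

(* Defs.v *)
From mathcomp Require Import all_boot.
Set Implicit Arguments. Unset Strict Implicit. Unset Printing Implicit Defensive.

Section Dynamics.
Variables (T : finType) (adj : rel T) (tI tE : T -> nat).

Definition nbhd (v : T) : {set T} := [set u | adj v u].

Fixpoint Evg (S : {set T}) (tau : nat) : {set T} :=
  match tau with
  | 0 => S
  | tau'.+1 => Evg S tau' :|: [set u | tE u <= #|nbhd u :&: Evg S tau'|]
  end.

Fixpoint Inf (S : {set T}) (tau : nat) : {set T} :=
  match tau with
  | 0 => S
  | tau'.+1 => Inf S tau' :|: [set u | tI u <= #|nbhd u :&: Evg S tau'|]
  end.

(* rho = the first rho >= 1 with Evg[S,rho] = Evg[S,rho-1]
   (such a rho always exists with rho - 1 <= #|T|, the Evg chain being
   increasing in a finite type). *)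
Definition rho (S : {set T}) : nat :=
  (find (fun r => Evg S r.+1 == Evg S r) (iota 0 #|T|.+1)).+1.

Definition InfFinal (S : {set T}) : {set T} := Inf S (rho S).

Definition MES_optimal (beta : nat) (S : {set T}) : Prop :=
  #|S| <= beta /\
  forall S' : {set T}, #|S'| <= beta -> #|InfFinal S'| <= #|InfFinal S|.

End Dynamics.

Definition Kn_adj (n : nat) : rel 'I_n := fun u v => u != v.
Arguments Kn_adj n u v : clear implicits.

Definition valid_thresholds (T : finType) (adj : rel T) (tI tE : T -> nat) :=
  forall v : T, tI v <= tE v /\ tE v <= #|nbhd adj v| + 1.

(* Unit-cost RAM (registers indexed by nat, holding nats)              *)
Inductive instr : Type :=
| IConst of nat & nat          (* IConst r k   : M[r] := k                 *)
| IAdd of nat & nat & nat      (* IAdd r a b   : M[r] := M[a] + M[b]       *)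
| ISub of nat & nat & nat      (* ISub r a b   : M[r] := M[a] - M[b] (trunc)*)
| ILoad of nat & nat           (* ILoad r a    : M[r] := M[M[a]]           *)
| IStore of nat & nat          (* IStore a r   : M[M[a]] := M[r]           *)
| IJz of nat & nat             (* IJz r l      : if M[r] = 0 goto l        *)
| IJmp of nat                  (* IJmp l       : goto l                    *)
| IHalt.

Definition mem := nat -> nat.
Definition config := (nat * mem)%type.

Definition upd (m : mem) (r v : nat) : mem := fun x => if x == r then v else m x.

Definition step (P : seq instr) (c : config) : option config :=
  let: (pc, m) := c in
  if pc < size P then
    match nth IHalt P pc with
    | IConst r k => Some (pc.+1, upd m r k)
    | IAdd r a b => Some (pc.+1, upd m r (m a + m b))
    | ISub r a b => Some (pc.+1, upd m r (m a - m b))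
    | ILoad r a => Some (pc.+1, upd m r (m (m a)))
    | IStore a r => Some (pc.+1, upd m (m a) (m r))
    | IJz r l => Some (if m r == 0 then l else pc.+1, m)
    | IJmp l => Some (l, m)
    | IHalt => None
    end
  else None.

Definition halted (P : seq instr) (c : config) : bool :=
  if step P c is None then true else false.

Fixpoint exec (P : seq instr) (k : nat) (c : config) : config :=
  match k with
  | 0 => c
  | k'.+1 => if step P c is Some c' then exec P k' c' else c
  end.

(* Input encoding of a MES instance on K_n:
   M[0] = n, M[1] = beta, M[2+i] = t_I(i), M[2+n+i] = t_E(i) (i < n),
   all other registers 0; execution starts at pc = 0. *)
Definition init_mem (n beta : nat) (tI tE : 'I_n -> nat) : mem :=
  fun x =>
    if x == 0 then n else if x == 1 then beta else
    if x - 2 < n then nth 0 (codom tI) (x - 2)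
    else nth 0 (codom tE) (x - 2 - n).

(* Output decoding: on halting, M[0] = k and M[1], ..., M[k] list the
   vertices of the returned seed set S. *)
Definition output_set (n : nat) (m : mem) : {set 'I_n} :=
  [set i : 'I_n | [exists j : 'I_(m 0), m j.+1 == i]].

Arguments init_mem n beta tI tE x : clear implicits.
Arguments output_set n m : clear implicits.

(* Main.v *)
Require Import Defs.
From mathcomp Require Import all_boot.
From mathcomp Require Import zify.
Set Implicit Arguments. Unset Strict Implicit. Unset Printing Implicit Defensive.

Definition Prog : seq instr := [::
  (* 0 *) IJz 0 186;
  (* 1 *) IAdd 1 1 0;
  (* 2 *) IAdd 0 0 1;
  (* 3 *) IAdd 0 0 1;
  (* 4 *) IStore 0 1;
  (* 5 *) IConst 1 36;
  (* 6 *) IAdd 1 1 0;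
  (* 7 *) IStore 1 16;
  (* 8 *) IConst 1 35;
  (* 9 *) IAdd 1 1 0;
  (* 10 *) IStore 1 15;
  (* 11 *) IConst 1 34;
  (* 12 *) IAdd 1 1 0;
  (* 13 *) IStore 1 14;
  (* 14 *) IConst 1 33;
  (* 15 *) IAdd 1 1 0;
  (* 16 *) IStore 1 13;
  (* 17 *) IConst 1 32;
  (* 18 *) IAdd 1 1 0;
  (* 19 *) IStore 1 12;
  (* 20 *) IConst 1 31;
  (* 21 *) IAdd 1 1 0;
  (* 22 *) IStore 1 11;
  (* 23 *) IConst 1 30;
  (* 24 *) IAdd 1 1 0;
  (* 25 *) IStore 1 10;
  (* 26 *) IConst 1 29;
  (* 27 *) IAdd 1 1 0;
  (* 28 *) IStore 1 9;
  (* 29 *) IConst 1 28;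
  (* 30 *) IAdd 1 1 0;
  (* 31 *) IStore 1 8;
  (* 32 *) IConst 1 27;
  (* 33 *) IAdd 1 1 0;
  (* 34 *) IStore 1 7;
  (* 35 *) IConst 1 26;
  (* 36 *) IAdd 1 1 0;
  (* 37 *) IStore 1 6;
  (* 38 *) IConst 1 25;
  (* 39 *) IAdd 1 1 0;
  (* 40 *) IStore 1 5;
  (* 41 *) IConst 1 24;
  (* 42 *) IAdd 1 1 0;
  (* 43 *) IStore 1 4;
  (* 44 *) IConst 1 23;
  (* 45 *) IAdd 1 1 0;
  (* 46 *) IStore 1 3;
  (* 47 *) IConst 1 22;
  (* 48 *) IAdd 1 1 0;
  (* 49 *) IStore 1 2;
  (* 50 *) ILoad 2 0;
  (* 51 *) ISub 3 0 2;
  (* 52 *) ISub 3 3 2;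
  (* 53 *) ISub 4 2 3;
  (* 54 *) IConst 5 1;
  (* 55 *) IConst 10 20;
  (* 56 *) IAdd 10 10 0;
  (* 57 *) IAdd 11 10 10;
  (* 58 *) IAdd 12 11 10;
  (* 59 *) IConst 7 17;
  (* 60 *) IAdd 8 10 7;
  (* 61 *) ISub 6 7 3;
  (* 62 *) ISub 6 6 5;
  (* 63 *) IJz 6 65;
  (* 64 *) IJmp 70;
  (* 65 *) ILoad 2 7;
  (* 66 *) IStore 8 2;
  (* 67 *) IAdd 7 7 5;
  (* 68 *) IAdd 8 8 5;
  (* 69 *) IJmp 61;
  (* 70 *) ISub 6 4 3;
  (* 71 *) ISub 4 4 6;
  (* 72 *) IConst 7 0;
  (* 73 *) IConst 8 2;
  (* 74 *) IAdd 8 8 10;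
  (* 75 *) ISub 6 3 7;
  (* 76 *) IJz 6 85;
  (* 77 *) ILoad 2 8;
  (* 78 *) IAdd 9 11 2;
  (* 79 *) ILoad 6 9;
  (* 80 *) IAdd 6 6 5;
  (* 81 *) IStore 9 6;
  (* 82 *) IAdd 7 7 5;
  (* 83 *) IAdd 8 8 5;
  (* 84 *) IJmp 75;
  (* 85 *) IConst 14 0;
  (* 86 *) IAdd 13 3 14;
  (* 87 *) IAdd 9 11 13;
  (* 88 *) ILoad 2 9;
  (* 89 *) IAdd 14 14 2;
  (* 90 *) ISub 6 4 14;
  (* 91 *) IJz 6 94;
  (* 92 *) ISub 13 13 5;
  (* 93 *) IJmp 87;
  (* 94 *) ISub 15 14 2;
  (* 95 *) ISub 15 4 15;
  (* 96 *) IConst 7 0;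
  (* 97 *) IConst 8 2;
  (* 98 *) IAdd 8 8 10;
  (* 99 *) IAdd 9 12 7;
  (* 100 *) ISub 6 3 7;
  (* 101 *) IJz 6 118;
  (* 102 *) ILoad 2 8;
  (* 103 *) ISub 6 2 13;
  (* 104 *) IJz 6 108;
  (* 105 *) IStore 9 7;
  (* 106 *) IAdd 9 9 5;
  (* 107 *) IJmp 115;
  (* 108 *) ISub 6 13 2;
  (* 109 *) IJz 6 111;
  (* 110 *) IJmp 115;
  (* 111 *) IJz 15 115;
  (* 112 *) IStore 9 7;
  (* 113 *) IAdd 9 9 5;
  (* 114 *) ISub 15 15 5;
  (* 115 *) IAdd 7 7 5;
  (* 116 *) IAdd 8 8 5;
  (* 117 *) IJmp 100;
  (* 118 *) ISub 9 12 5;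
  (* 119 *) IStore 9 4;
  (* 120 *) ILoad 2 12;
  (* 121 *) ISub 9 9 5;
  (* 122 *) IStore 9 2;
  (* 123 *) IConst 6 0;
  (* 124 *) IAdd 7 4 6;
  (* 125 *) ISub 8 12 5;
  (* 126 *) IAdd 8 8 7;
  (* 127 *) IConst 6 16;
  (* 128 *) ISub 6 7 6;
  (* 129 *) IJz 6 135;
  (* 130 *) ILoad 2 8;
  (* 131 *) IStore 7 2;
  (* 132 *) ISub 7 7 5;
  (* 133 *) ISub 8 8 5;
  (* 134 *) IJmp 127;
  (* 135 *) ISub 1 12 5;
  (* 136 *) ISub 1 1 5;
  (* 137 *) IConst 0 17;
  (* 138 *) IAdd 0 0 1;
  (* 139 *) ILoad 16 0;
  (* 140 *) IConst 0 16;
  (* 141 *) IAdd 0 0 1;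
  (* 142 *) ILoad 15 0;
  (* 143 *) IConst 0 15;
  (* 144 *) IAdd 0 0 1;
  (* 145 *) ILoad 14 0;
  (* 146 *) IConst 0 14;
  (* 147 *) IAdd 0 0 1;
  (* 148 *) ILoad 13 0;
  (* 149 *) IConst 0 13;
  (* 150 *) IAdd 0 0 1;
  (* 151 *) ILoad 12 0;
  (* 152 *) IConst 0 12;
  (* 153 *) IAdd 0 0 1;
  (* 154 *) ILoad 11 0;
  (* 155 *) IConst 0 11;
  (* 156 *) IAdd 0 0 1;
  (* 157 *) ILoad 10 0;
  (* 158 *) IConst 0 10;
  (* 159 *) IAdd 0 0 1;
  (* 160 *) ILoad 9 0;
  (* 161 *) IConst 0 9;
  (* 162 *) IAdd 0 0 1;
  (* 163 *) ILoad 8 0;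
  (* 164 *) IConst 0 8;
  (* 165 *) IAdd 0 0 1;
  (* 166 *) ILoad 7 0;
  (* 167 *) IConst 0 7;
  (* 168 *) IAdd 0 0 1;
  (* 169 *) ILoad 6 0;
  (* 170 *) IConst 0 6;
  (* 171 *) IAdd 0 0 1;
  (* 172 *) ILoad 5 0;
  (* 173 *) IConst 0 5;
  (* 174 *) IAdd 0 0 1;
  (* 175 *) ILoad 4 0;
  (* 176 *) IConst 0 4;
  (* 177 *) IAdd 0 0 1;
  (* 178 *) ILoad 3 0;
  (* 179 *) IConst 0 3;
  (* 180 *) IAdd 0 0 1;
  (* 181 *) ILoad 2 0;
  (* 182 *) IConst 0 1;
  (* 183 *) IAdd 0 0 1;
  (* 184 *) ILoad 1 1;
  (* 185 *) ILoad 0 0;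
  (* 186 *) IHalt].

Section RAM.
Variable P : seq instr.

Lemma exec_halted k c : halted P c -> exec P k c = c.
Proof. by case: k => //= k; rewrite /halted; case: (step P c). Qed.

Lemma exec_add a b c : exec P (a + b) c = exec P b (exec P a c).
Proof.
elim: a c => // a IH c; rewrite addSn /=.
case E: (step P c) => [c'|]; first exact: IH.
by rewrite exec_halted // /halted E.
Qed.

Definition runs c c' b := exists t, t <= b /\ exec P t c = c'.

Lemma runs_refl c : runs c c 0. Proof. by exists 0. Qed.

Lemma runs_trans c1 c2 c3 b1 b2 : runs c1 c2 b1 -> runs c2 c3 b2 -> runs c1 c3 (b1 + b2).
Proof.
move=> [t1 [h1 e1]] [t2 [h2 e2]]; exists (t1 + t2); split; first exact: leq_add.
by rewrite exec_add e1.
Qed.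

Lemma runs_step c c' : step P c = Some c' -> runs c c' 1.
Proof. by move=> h; exists 1; rewrite /= h. Qed.

Lemma runs_weak c c' b b' : b <= b' -> runs c c' b -> runs c c' b'.
Proof. by move=> hb [t [h e]]; exists t; split=> //; exact: leq_trans hb. Qed.

Lemma runs_loop (Inv : nat -> config -> Prop) (Post : config -> Prop) s :
  (forall mu c, Inv mu c ->
     (exists c', runs c c' s /\ Post c') \/
     (exists c' mu', mu' < mu /\ runs c c' s /\ Inv mu' c')) ->
  forall mu c, Inv mu c -> exists c', runs c c' (mu.+1 * s) /\ Post c'.
Proof.
move=> H; elim/ltn_ind => mu IH c Hc.
case: (H _ _ Hc) => [[c' [r p]]|[c' [mu' [lt [r i]]]]].
  exists c'; split=> //; apply: runs_weak r; rewrite mulSn; exact: leq_addr.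
have [c'' [r' p']] := IH _ lt _ i.
exists c''; split=> //; apply: runs_weak (runs_trans r r').
rewrite -mulSn; apply: leq_mul => //.
Qed.

Lemma stepE pc m : pc < size P -> step P (pc, m) =
  match nth IHalt P pc with
    | IConst r k => Some (pc.+1, upd m r k)
    | IAdd r a b => Some (pc.+1, upd m r (m a + m b))
    | ISub r a b => Some (pc.+1, upd m r (m a - m b))
    | ILoad r a => Some (pc.+1, upd m r (m (m a)))
    | IStore a r => Some (pc.+1, upd m (m a) (m r))
    | IJz r l => Some (if m r == 0 then l else pc.+1, m)
    | IJmp l => Some (l, m)
    | IHalt => None
    end.
Proof. by rewrite /step => ->. Qed.

End RAM.

Lemma updE m r v x : upd m r v x = if x == r then v else m x.
Proof. by []. Qed.

Ltac dec_eq :=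
  repeat match goal with
  | |- context [?a == ?b] =>
     first [ rewrite (_ : (a == b) = false); last by (apply/eqP; lia)
           | rewrite (_ : (a == b) = true); last by (apply/eqP; lia) ]
  end.

Ltac rw_regs := repeat match goal with H : ?f ?x = _ |- context [?f ?x] => rewrite H end.

Ltac msimp := rewrite ?updE; dec_eq; rw_regs; dec_eq.

Ltac go := eapply runs_trans; [ apply: runs_step; rewrite stepE; [ | by [] ]; rewrite [nth _ _ _]/=; cbv beta iota; msimp; cbv beta iota; reflexivity | ].

Section Opt.
Variables (n : nat) (tI tE : 'I_n -> nat).
Hypothesis valid : valid_thresholds (Kn_adj n) tI tE.
Local Notation adj := (Kn_adj n).
Local Notation Evg := (Evg adj tE).
Local Notation Inf := (Inf adj tI tE).

Lemma nbhd_le (u : 'I_n) (E : {set 'I_n}) : #|nbhd adj u :&: E| <= #|E|.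
Proof. by apply: subset_leq_card; apply: subsetIr. Qed.

Lemma nbhd_out (u : 'I_n) (E : {set 'I_n}) : u \notin E -> #|nbhd adj u :&: E| = #|E|.
Proof.
move=> uE; apply: eq_card => v; rewrite !inE /Kn_adj.
by case: (eqVneq u v) => [<-|] //=; rewrite (negbTE uE).
Qed.

Lemma tIE u : tI u <= tE u. Proof. by case: (valid u). Qed.

Lemma Evg_S (S : {set 'I_n}) t : S \subset Evg S t.
Proof. elim: t => //= t IH; exact: subset_trans IH (subsetUl _ _). Qed.

Lemma Evg_Inf (S : {set 'I_n}) t : Evg S t \subset Inf S t.
Proof.
elim: t => //= t IH; apply/subsetP=> u; rewrite !inE => /orP[uE|uT].
  by rewrite (subsetP IH u uE).
by rewrite (leq_trans (tIE u) uT) orbT.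
Qed.

Lemma Inf_S (S : {set 'I_n}) t : S \subset Inf S t.
Proof. exact: subset_trans (Evg_S S t) (Evg_Inf S t). Qed.

Lemma rho_fix (S : {set 'I_n}) : Evg S (rho adj tE S) = Evg S (rho adj tE S).-1.
Proof.
rewrite /rho succnK.
set a := (fun r => Evg S r.+1 == Evg S r).
have Hhas : has a (iota 0 #|'I_n|.+1).
  apply/negPn/negP => /hasPn H.
  have Hc : forall r, r <= #|'I_n|.+1 -> r <= #|Evg S r|.
    elim=> // r IH Hr.
    have Hr' : r \in iota 0 #|'I_n|.+1 by rewrite mem_iota.
    have := H r Hr'; rewrite /a => Hne.
    have Hp : Evg S r \proper Evg S r.+1.
      rewrite properEneq eq_sym Hne /=; exact: subsetUl.
    have := proper_card Hp; have := IH (ltnW Hr); lia.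
  have := Hc _ (leqnn _); have := subset_leq_card (subsetT (Evg S #|'I_n|.+1)); rewrite cardsT card_ord; lia.
have := nth_find 0 Hhas; rewrite nth_iota ?add0n; last by move: Hhas; rewrite has_find size_iota.
by rewrite /a => /eqP.
Qed.

Theorem opt (beta : nat) (Ss : {set 'I_n}) :
  #|Ss| = minn beta n ->
  (forall x y, x \in Ss -> y \notin Ss -> tI y <= tI x) ->
  MES_optimal adj tI tE beta Ss.
Proof.
move=> cardS up; split; first by rewrite cardS geq_minl.
move=> S' cS'.
have cS'' : #|S'| <= #|Ss|.
  rewrite cardS leq_min cS' /=; have := max_card (mem S'); by rewrite card_ord.
rewrite /InfFinal.
set r := rho adj tE Ss.
have rE : r = r.-1.+1 by rewrite /r /rho.
set Es := Evg Ss r.-1.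
have fixE : Evg Ss r.-1.+1 = Es by rewrite -rE rho_fix.
set Fs := #|Es|.
have L1 : forall u, tI u <= Fs -> u \in Inf Ss r.
  move=> u Hu; rewrite rE /=; rewrite inE.
  case uE: (u \in Es); first by rewrite (subsetP (Evg_Inf Ss r.-1) u uE).
  by rewrite inE nbhd_out ?uE // Hu orbT.
have SsE : Ss \subset Es by exact: Evg_S.
have SsI : Ss \subset Inf Ss r by exact: Inf_S.
case: (boolP [forall u, u \in Inf Ss r]) => [/forallP Hall|].
  have -> : Inf Ss r = setT by apply/setP=> u; rewrite in_setT Hall.
  by rewrite cardsT; apply: max_card.
rewrite negb_forall => /existsP [y yI].
have yF : Fs < tI y by rewrite ltnNge; apply/negP => /L1; rewrite (negbTE yI).
have yS : y \notin Ss by apply/negP => /(subsetP SsI); rewrite (negbTE yI).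
have SsF : forall x, x \in Ss -> Fs < tI x by move=> x xS; exact: leq_trans yF (up _ _ xS yS).
set C := [set u | tE u <= Fs].
have CE : C \subset Es.
  apply/subsetP=> u; rewrite inE => Hu; apply/negPn/negP => uE.
  have : u \in Evg Ss r.-1.+1 by rewrite /= inE; apply/orP; right; rewrite inE nbhd_out.
  by rewrite fixE (negbTE uE).
have dSC : #|Ss :&: C| = 0.
  apply/eqP; rewrite cards_eq0; apply/eqP/setP=> u; rewrite !inE.
  apply/negP=> /andP[uS uC]; have := SsF u uS; have := tIE u; lia.
have cSC : #|Ss| + #|C| <= Fs.
  have := cardsUI Ss C; rewrite dSC addn0 => <-.
  apply: subset_leq_card; by rewrite subUset SsE CE.
have Ev : forall t, Evg S' t \subset S' :|: C.
  elim=> /= [|t IH]; first exact: subsetUl.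
  rewrite subUset IH /=; apply/subsetP=> u; rewrite inE => Hu.
  rewrite !inE; apply/orP; right.
  have := leq_trans Hu (nbhd_le u _).
  have := subset_leq_card IH; have := cardsU S' C; move=> H1 H2 H3. apply: (leq_trans H3); apply: (leq_trans H2); rewrite H1; apply: leq_trans (leq_subr _ _) _; apply: leq_trans cSC; by rewrite leq_add2r.
set L := [set u | tI u <= Fs].
have Iv : forall t, Inf S' t \subset S' :|: L.
  elim=> /= [|t IH]; first exact: subsetUl.
  rewrite subUset IH /=; apply/subsetP=> u; rewrite inE => Hu.
  rewrite !inE; apply/orP; right.
  have := leq_trans Hu (nbhd_le u _).
  move=> H3; apply: (leq_trans H3); apply: (leq_trans (subset_leq_card (Ev t))); rewrite cardsU; apply: leq_trans (leq_subr _ _) _; apply: leq_trans cSC; by rewrite leq_add2r.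
have dSL : #|Ss :|: L| = #|Ss| + #|L|.
  have := cardsUI Ss L; rewrite addnC.
  have -> : #|Ss :&: L| = 0.
    apply/eqP; rewrite cards_eq0; apply/eqP/setP=> u; rewrite !inE.
    apply/negP=> /andP[a b]; have := SsF u a; lia.
  by [].
have := subset_leq_card (Iv (rho adj tE S')).
have : #|Ss :|: L| <= #|Inf Ss r|.
  apply: subset_leq_card; rewrite subUset SsI /=; apply/subsetP=> u; rewrite inE; exact: L1.
have := cardsU S' L; lia.
Qed.

End Opt.

Section Comb.
Variable f : nat -> nat.
Definition gstep th (st : nat * seq nat) i :=
  if th < f i then (st.1, rcons st.2 i)
  else if (f i == th) && (0 < st.1) then (st.1.-1, rcons st.2 i)
  else st.
Definition gsel th r0 i := foldl (gstep th) (r0, [::]) (iota 0 i).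
Definition gh i t := count (fun j => f j == t) (iota 0 i).
Definition ggt i t := count (fun j => t < f j) (iota 0 i).

Lemma gselS th r0 i : gsel th r0 i.+1 = gstep th (gsel th r0 i) i.
Proof. by rewrite /gsel -[i.+1]addn1 iotaD foldl_cat. Qed.
Lemma ghS i t : gh i.+1 t = gh i t + (f i == t).
Proof. by rewrite /gh -[i.+1]addn1 iotaD count_cat /= addn0. Qed.
Lemma ggtS i t : ggt i.+1 t = ggt i t + (t < f i).
Proof. by rewrite /ggt -[i.+1]addn1 iotaD count_cat /= addn0. Qed.

Lemma gsel_inv th r0 i :
  [/\ (gsel th r0 i).1 = r0 - minn r0 (gh i th),
      size (gsel th r0 i).2 = ggt i th + minn r0 (gh i th),
      forall x, (x \in (gsel th r0 i).2) = (x < i) && ((th < f x) || ((f x == th) && (gh x th < r0)))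
    & uniq (gsel th r0 i).2].
Proof.
elim: i => [|i [IH1 IH2 IH3 IH4]].
  by split => //=; rewrite /gh /= ?minn0 ?subn0.
rewrite gselS /gstep ghS ggtS.
move: IH1 IH2 IH3 IH4; case: (gsel th r0 i) => r out /= IH1 IH2 IH3 IH4.
have ni : i \notin out by rewrite IH3 ltnn.
have Hle : forall x, (x < i.+1) = (x < i) || (x == i) by move=> x; rewrite ltnS leq_eqVlt orbC.
case: (ltnP th (f i)) => h1 /=.
  have -> : (f i == th) = false by apply/eqP; lia.
  split => //=.
  - by rewrite addn0.
  - by rewrite size_rcons IH2; lia.
  - move=> x; rewrite mem_rcons in_cons IH3 Hle.
    by case: (ltngtP x i) => hx //=; rewrite hx h1.
  - by rewrite rcons_uniq ni IH4.
case: (eqVneq (f i) th) => h2 /=.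
  case: (posnP r) => hr /=.
    split => //=.
    - lia.
    - lia.
    - move=> x; rewrite IH3 Hle.
      case: (ltngtP x i) => hx //=; rewrite hx ltnNge h1 h2 eqxx /=; lia.
  split => //=.
  - lia.
  - rewrite size_rcons IH2; lia.
  - move=> x; rewrite mem_rcons in_cons IH3 Hle.
    case: (ltngtP x i) => hx //=; rewrite hx ltnNge h1 h2 eqxx /=; lia.
  - by rewrite rcons_uniq ni IH4.
split => //=.
- by rewrite !addn0.
- by rewrite !addn0.
- move=> x; rewrite IH3 Hle.
  case: (ltngtP x i) => hx //=; rewrite hx ltnNge h1 (negbTE h2) /=.
  by [].
Qed.

End Comb.

Lemma save_blk k m : k < 15 ->
  runs Prog (5 + 3*k, m)
    (8 + 3*k, upd (upd (upd m 1 (36 - k)) 1 (36 - k + m 0)) (36 - k + m 0) (m (16 - k))) 3.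
Proof.
do 15 (case: k => [_|k]; [eapply runs_weak; last first; [do 3 go; exact: runs_refl | by []]|]); by [].
Qed.

Section Main.
Variables (n beta : nat) (tI tE : 'I_n -> nat).
Hypothesis n0 : 0 < n.
Local Notation m0 := (init_mem n beta tI tE).
Local Notation A := (n + (beta + n) + (beta + n)).
Local Notation Off := (20 + A).

Lemma m0_zero x : n + n + 2 <= x -> m0 x = 0.
Proof.
move=> hx; rewrite /init_mem.
have -> : (x == 0) = false by apply/eqP; lia.
have -> : (x == 1) = false by apply/eqP; lia.
have -> : (x - 2 < n) = false by apply/negbTE; rewrite -leqNgt; lia.
by rewrite nth_default // size_codom card_ord; lia.
Qed.

Record InvS (mu : nat) (c : config) : Prop := {
  S0 : mu <= 15;
  Spc : c.1 = 5 + 3 * (15 - mu);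
  S1 : c.2 0 = A;
  S2 : c.2 A = beta + n;
  S3 : forall x, 2 <= x <= n.+1 -> x <= mu.+1 -> c.2 x = m0 x;
  S4 : forall x, 2 <= x <= n.+1 -> mu.+1 < x <= 16 -> c.2 (Off + x) = m0 x;
  S5 : forall x, 17 <= x <= n.+1 -> c.2 x = m0 x;
  S6 : forall x, Off + Off <= x -> c.2 x = 0 }.

Lemma P0 : exists c, runs Prog (0, m0) c 5 /\ InvS 15 c.
Proof.
have h0 : m0 0 = n by [].
have h1 : m0 1 = beta by [].
eexists; split.
  eapply runs_weak; last first; [do 5 go; exact: runs_refl | by []].
constructor => //=.
- by msimp.
- by msimp.
- by move=> x hx _; msimp.
- by move=> x hx; lia.
- by move=> x hx; msimp.
- move=> x hx; msimp; apply: m0_zero; lia.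
Qed.

Lemma P1 c : InvS 15 c -> exists c', runs Prog c c' 48 /\ InvS 0 c'.
Proof.
move=> H; apply: (runs_loop (Inv := InvS) (Post := InvS 0) (s := 3)) H => mu [pc m] I.
case: mu I => [|mu] I; first by left; exists (pc, m); split=> //; apply: runs_weak (runs_refl _ _).
right; have [/= hmu hpc h0 hA h3 h4 h5 h6] := I.
eexists (_, _), mu; split=> //; split.
  rewrite hpc; apply: save_blk; lia.
have e1 : 16 - (15 - mu.+1) = mu.+2 by lia.
have e2 : 36 - (15 - mu.+1) + A = Off + mu.+2 by lia.
rewrite h0 e1 e2.
constructor => //=; try lia.
- by msimp.
- move=> x hx hx2; msimp; apply: h3; lia.
- move=> x hx hx2; msimp; case: (eqVneq x mu.+2) => [->|ne].
    by rewrite eqxx; apply: h3; lia.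
  have -> : (Off + x == Off + mu.+2) = false by apply/eqP; lia.
  apply: h4; lia.
- by move=> x hx; msimp; apply: h5.
- by move=> x hx; msimp; apply: h6.
Qed.

Record InvC (j : nat) (c : config) : Prop := {
  Cpc : c.1 = 61;
  Cj : 17 <= j;
  C7 : c.2 7 = j;
  C8 : c.2 8 = Off + j;
  C3 : c.2 3 = n;
  C4 : c.2 4 = beta;
  C5 : c.2 5 = 1;
  C10 : c.2 10 = Off;
  C11 : c.2 11 = Off + Off;
  C12 : c.2 12 = Off + Off + Off;
  Cdat : forall x, 2 <= x <= n.+1 -> x < j -> c.2 (Off + x) = m0 x;
  Crest : forall x, j <= x <= n.+1 -> c.2 x = m0 x;
  Czero : forall x, Off + Off <= x -> c.2 x = 0 }.

Record InvD (c : config) : Prop := {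
  Dpc : c.1 = 70;
  D3 : c.2 3 = n;
  D4 : c.2 4 = beta;
  D5 : c.2 5 = 1;
  D10 : c.2 10 = Off;
  D11 : c.2 11 = Off + Off;
  D12 : c.2 12 = Off + Off + Off;
  Ddat : forall x, 2 <= x <= n.+1 -> c.2 (Off + x) = m0 x;
  Dzero : forall x, Off + Off <= x -> c.2 x = 0 }.

Lemma P2 c : InvS 0 c -> exists c', runs Prog c c' 11 /\ InvC 17 c'.
Proof.
case: c => pc m [/= _ hpc h0 hA h3 h4 h5 h6]; rewrite hpc /=.
eexists; split.
  eapply runs_weak; last first; [do 11 go; exact: runs_refl | by []].
constructor => //=; try (by msimp); try (msimp; lia).
- move=> x hx hx2; msimp; apply: h4; lia.
- move=> x hx; msimp; apply: h5; lia.
- move=> x hx; msimp; apply: h6; lia.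
Qed.

Lemma P3 c : InvC 17 c -> exists c', runs Prog c c' ((n.+2 - 17).+1 * 8) /\ InvD c'.
Proof.
move=> H.
apply: (runs_loop (Inv := fun mu c => exists j, mu = n.+2 - j /\ InvC j c) (Post := InvD) (s := 8)); last by exists 17.
move=> mu [pc m] [j [-> [/= hpc hj h7 h8 h3 h4 h5 h10 h11 h12 hd hr hz]]]; subst pc.
case: (leqP j n.+1) => hjn.
- right; eexists; exists (n.+2 - j.+1); split; first lia; split.
    eapply runs_weak; last first; [do 8 go; exact: runs_refl | by []].
  exists j.+1; split=> //.
  constructor => //=; try (by msimp); try (msimp; lia).
  + move=> x hx hx2; msimp; case: (eqVneq x j) => [->|ne].
      by rewrite eqxx; apply: hr; lia.
    have -> : (Off + x == Off + j) = false by apply/eqP; lia.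
    apply: hd; lia.
  + move=> x hx; msimp; apply: hr; lia.
  + move=> x hx; msimp; apply: hz; lia.
- left; eexists; split.
    eapply runs_weak; last first; [do 4 go; exact: runs_refl | by []].
  constructor => //=; try (by msimp).
  + move=> x hx; msimp; apply: hd; lia.
  + move=> x hx; msimp; apply: hz; lia.
Qed.

Local Notation tv i := (m0 (2 + i)).
Hypothesis tvn : forall i, i < n -> tv i <= n.
Local Notation K := (minn beta n).
Definition hc i t := count (fun j => m0 (2 + j) == t) (iota 0 i).

Record InvH (i : nat) (c : config) : Prop := {
  Hpc : c.1 = 75;
  Hi : i <= n;
  H7 : c.2 7 = i;
  H8 : c.2 8 = Off + 2 + i;
  H3 : c.2 3 = n;
  H4 : c.2 4 = K;
  H5 : c.2 5 = 1;
  H10 : c.2 10 = Off;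
  H11 : c.2 11 = Off + Off;
  H12 : c.2 12 = Off + Off + Off;
  Hdat : forall x, x < n -> c.2 (Off + 2 + x) = tv x;
  Hh : forall t, t <= n -> c.2 (Off + Off + t) = hc i t }.

Lemma P4 c : InvD c -> exists c', runs Prog c c' 5 /\ InvH 0 c'.
Proof.
case: c => pc m [/= hpc h3 h4 h5 h10 h11 h12 hd hz]; subst pc.
eexists; split.
  eapply runs_weak; last first; [do 5 go; exact: runs_refl | by []].
constructor => //=; try (by msimp); try (msimp; lia).
- move=> x hx; msimp; rewrite -hd; [congr m; lia | lia].
- move=> t ht; msimp; rewrite /hc /=; apply: hz; lia.
Qed.

Lemma hcS i t : hc i.+1 t = hc i t + (tv i == t).
Proof. by rewrite /hc -[i.+1]addn1 iotaD count_cat /= addn0. Qed.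

Record InvT0 (c : config) : Prop := {
  T0pc : c.1 = 85;
  T03 : c.2 3 = n;
  T04 : c.2 4 = K;
  T05 : c.2 5 = 1;
  T010 : c.2 10 = Off;
  T011 : c.2 11 = Off + Off;
  T012 : c.2 12 = Off + Off + Off;
  T0dat : forall x, x < n -> c.2 (Off + 2 + x) = tv x;
  T0h : forall t, t <= n -> c.2 (Off + Off + t) = hc n t }.

Lemma P5 c : InvH 0 c -> exists c', runs Prog c c' (n.+1 * 10) /\ InvT0 c'.
Proof.
move=> H.
apply: (runs_loop (Inv := fun mu c => exists i, mu = n - i /\ InvH i c) (Post := InvT0) (s := 10)); last by exists 0; rewrite subn0.
move=> mu [pc m] [i [-> [/= hpc hi h7 h8 h3 h4 h5 h10 h11 h12 hd hh]]]; subst pc.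
case: (ltnP i n) => hin.
- have ht := hd _ hin.
  have hti := tvn hin.
  have hh1 := hh _ hti.
  right; eexists; exists (n - i.+1); split; first lia; split.
    eapply runs_weak; last first; [do 10 go; exact: runs_refl | by []].
  exists i.+1; split=> //.
  constructor => //=; try (by msimp); try (msimp; lia).
  + move=> x hx; msimp; exact: hd.
  + move=> t htn; rewrite hcS; msimp; case: (eqVneq t (tv i)) => [->|ne].
      by rewrite eqxx.
    have -> : (Off + Off + t == Off + Off + tv i) = false by apply/eqP; lia.
    by rewrite hh // addn0.
- left; have ein : i = n by lia.
  rewrite {}ein in h7 h8 hh hi hin; eexists; split.
    eapply runs_weak; last first; [do 2 go; exact: runs_refl | by []].
  by constructor.
Qed.

Definition cgt t := count (fun j => t < m0 (2 + j)) (iota 0 n).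

Lemma cge_split_gen (f : nat -> nat) t s :
  count (fun j => t <= f j) s = count (fun j => t < f j) s + count (fun j => f j == t) s.
Proof.
elim: s => //= a s ->.
case: (ltngtP t (f a)) => h /=; lia.
Qed.

Lemma cge_split t : count (fun j => t <= tv j) (iota 0 n) = cgt t + hc n t.
Proof. exact: (cge_split_gen (fun j => tv j)). Qed.

Lemma cgt_pred t : 0 < t -> cgt t.-1 = cgt t + hc n t.
Proof.
move=> t0; rewrite -cge_split /cgt; apply: eq_count => j; by case: t t0.
Qed.

Lemma cgt_n : cgt n = 0.
Proof.
rewrite /cgt; apply/eqP; rewrite -leqn0 leqNgt -has_count; apply/hasPn => j.
by rewrite mem_iota add0n => /andP[_ /tvn]; rewrite leqNgt.
Qed.

Lemma cge0 : cgt 0 + hc n 0 = n.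
Proof.
rewrite -cge_split (eq_count (a2 := predT)) // count_predT size_iota //.
Qed.

Record InvT (t : nat) (c : config) : Prop := {
  Tpc : c.1 = 87;
  Tt : t <= n;
  T13 : c.2 13 = t;
  T14 : c.2 14 = cgt t;
  TK : cgt t <= K;
  T3 : c.2 3 = n;
  T4 : c.2 4 = K;
  T5 : c.2 5 = 1;
  T10 : c.2 10 = Off;
  T11 : c.2 11 = Off + Off;
  T12 : c.2 12 = Off + Off + Off;
  Tdat : forall x, x < n -> c.2 (Off + 2 + x) = tv x;
  Th : forall t, t <= n -> c.2 (Off + Off + t) = hc n t }.

Lemma P6 c : InvT0 c -> exists c', runs Prog c c' 2 /\ InvT n c'.
Proof.
case: c => pc m [/= hpc h3 h4 h5 h10 h11 h12 hd hh]; subst pc.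
eexists; split.
  eapply runs_weak; last first; [do 2 go; exact: runs_refl | by []].
constructor => //=; try (by msimp); try (msimp; lia);
  try (by msimp; rewrite cgt_n); try (by rewrite cgt_n).
Qed.

Record InvR (th : nat) (c : config) : Prop := {
  Rpc : c.1 = 94;
  Rt : th <= n;
  R13 : c.2 13 = th;
  R2 : c.2 2 = hc n th;
  R14 : c.2 14 = cgt th + hc n th;
  RK1 : cgt th <= K;
  RK2 : K <= cgt th + hc n th;
  R3 : c.2 3 = n;
  R4 : c.2 4 = K;
  R5 : c.2 5 = 1;
  R10 : c.2 10 = Off;
  R12 : c.2 12 = Off + Off + Off;
  Rdat : forall x, x < n -> c.2 (Off + 2 + x) = tv x }.

Lemma P7 c : InvT n c -> exists c', runs Prog c c' (n.+1 * 7) /\ exists th, InvR th c'.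
Proof.
move=> H.
apply: (runs_loop (Inv := InvT) (Post := fun c => exists th, InvR th c) (s := 7)) H.
move=> t [pc m] [/= hpc ht h13 h14 hK h3 h4 h5 h10 h11 h12 hd hh]; subst pc.
have hh1 := hh _ ht.
case: (leqP K (cgt t + hc n t)) => hk.
- left; eexists; split.
    eapply runs_weak; last first; [do 5 go; exact: runs_refl | by []].
  exists t; constructor => //=; try (by msimp); try (msimp; lia).
- have t0 : 0 < t.
    case: (posnP t) => // t0'; move: hk; rewrite t0' cge0; lia.
  right; eexists; exists t.-1; split; first lia; split.
    eapply runs_weak; last first; [do 7 go; exact: runs_refl | by []].
  constructor => //=; try (by msimp); try (msimp; lia).
  + by msimp; rewrite cgt_pred.
  + rewrite cgt_pred //; lia.
Qed.

Local Notation O := (Off + Off + Off).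

Definition sstep th (st : nat * seq nat) i :=
  if th < tv i then (st.1, rcons st.2 i)
  else if (tv i == th) && (0 < st.1) then (st.1.-1, rcons st.2 i)
  else st.
Definition selst th r0 i := foldl (sstep th) (r0, [::]) (iota 0 i).

Lemma selstS th r0 i : selst th r0 i.+1 = sstep th (selst th r0 i) i.
Proof. by rewrite /selst -[i.+1]addn1 iotaD foldl_cat. Qed.

Record InvL (th r0 i : nat) (c : config) : Prop := {
  Lpc : c.1 = 100;
  Li : i <= n;
  L7 : c.2 7 = i;
  L8 : c.2 8 = Off + 2 + i;
  L15 : c.2 15 = (selst th r0 i).1;
  L9 : c.2 9 = O + size (selst th r0 i).2;
  Lout : forall j, j < size (selst th r0 i).2 -> c.2 (O + j) = nth 0 (selst th r0 i).2 j;
  L3 : c.2 3 = n;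
  L4 : c.2 4 = K;
  L5 : c.2 5 = 1;
  L12 : c.2 12 = O;
  L13 : c.2 13 = th;
  Ldat : forall x, x < n -> c.2 (Off + 2 + x) = tv x }.

Lemma P8 th c : InvR th c -> exists c', runs Prog c c' 6 /\ InvL th (K - cgt th) 0 c'.
Proof.
case: c => pc m [/= hpc ht h13 h2 h14 hk1 hk2 h3 h4 h5 h10 h12 hd]; subst pc.
eexists; split.
  eapply runs_weak; last first; [do 6 go; exact: runs_refl | by []].
constructor => //=; try (by msimp); try (msimp; lia).
Qed.

Record InvE (th r0 : nat) (c : config) : Prop := {
  Epc : c.1 = 118;
  E4 : c.2 4 = K;
  E5 : c.2 5 = 1;
  E12 : c.2 12 = O;
  Eout : forall j, j < size (selst th r0 n).2 -> c.2 (O + j) = nth 0 (selst th r0 n).2 j }.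

Ltac splitS hS := let h1 := fresh "hS1" in let h2 := fresh "hS2" in
  have h1 := f_equal fst hS; have h2 := f_equal snd hS; clear hS; simpl in h1, h2.

Lemma P9 th r0 c : InvL th r0 0 c -> exists c', runs Prog c c' (n.+1 * 14) /\ InvE th r0 c'.
Proof.
move=> H.
apply: (runs_loop (Inv := fun mu c => exists i, mu = n - i /\ InvL th r0 i c) (Post := InvE th r0) (s := 14)); last by exists 0; rewrite subn0.
move=> mu [pc m] [i [-> [/= hpc hi h7 h8 h15 h9 hout h3 h4 h5 h12 h13 hd]]]; subst pc.
case: (ltnP i n) => hin; last first.
  have ein : i = n by lia.
  rewrite {}ein in h7 h8 h15 h9 hout hi hin.
  left; eexists; split.
    eapply runs_weak; last first; [do 2 go; exact: runs_refl | by []].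
  by constructor.
have ht := hd _ hin.
move: h15 h9 hout; case E: (selst th r0 i) => [r out] /= h15 h9 hout.
have hS := selstS th r0 i; rewrite E /sstep /= in hS; clear E.
right.
case: (ltnP th (tv i)) => h1.
  rewrite h1 in hS; splitS hS.
  eexists; exists (n - i.+1); split; first lia; split.
    eapply runs_weak; last first; [do 11 go; exact: runs_refl | by []].
  exists i.+1; split=> //.
  constructor => //=; rewrite ?hS1 ?hS2 ?size_rcons; try (by msimp); try (msimp; lia); try (by move=> ? ?; msimp; auto).
  move=> j hj; msimp; case: (eqVneq j (size out)) => [->|ne].
    by rewrite eqxx nth_rcons ltnn eqxx.
  have -> : (O + j == O + size out) = false by apply/eqP; lia.
  have hj2 : j < size out by lia.
  by rewrite nth_rcons hj2; apply: hout.
rewrite ltnNge h1 /= in hS.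
case: (eqVneq (tv i) th) => h2; last first.
  rewrite /= in hS; splitS hS.
  eexists; exists (n - i.+1); split; first lia; split.
    eapply runs_weak; last first; [do 11 go; exact: runs_refl | by []].
  exists i.+1; split=> //.
  by constructor => //=; rewrite ?hS1 ?hS2 ?size_rcons; try (by msimp); try (msimp; lia); try (by move=> ? ?; msimp; auto).
case: (eqVneq r 0) => h3'.
  rewrite h3' /= in hS h15; splitS hS.
  eexists; exists (n - i.+1); split; first lia; split.
    eapply runs_weak; last first; [do 11 go; exact: runs_refl | by []].
  exists i.+1; split=> //.
  by constructor => //=; rewrite ?hS1 ?hS2 ?size_rcons; try (by msimp); try (msimp; lia); try (by move=> ? ?; msimp; auto).
rewrite lt0n h3' h2 eqxx /= in hS; splitS hS.
eexists; exists (n - i.+1); split; first lia; split.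
  eapply runs_weak; last first; [do 14 go; exact: runs_refl | by []].
exists i.+1; split=> //.
constructor => //=; rewrite ?hS1 ?hS2 ?size_rcons; try (by msimp); try (msimp; lia); try (by move=> ? ?; msimp; auto).
move=> j hj; msimp; case: (eqVneq j (size out)) => [->|ne].
  by rewrite eqxx nth_rcons ltnn eqxx.
have -> : (O + j == O + size out) = false by apply/eqP; lia.
have hj2 : j < size out by lia.
  by rewrite nth_rcons hj2; apply: hout.
Qed.

Section Out.
Variable w : nat -> nat.

Record InvO (j : nat) (c : config) : Prop := {
  Opc : c.1 = 127;
  Oj : j <= K;
  O7 : c.2 7 = j;
  O8 : c.2 8 = O - 1 + j;
  O5 : c.2 5 = 1;
  O12 : c.2 12 = O;
  Om1 : c.2 (O - 1) = K;
  Om2 : c.2 (O - 2) = w 0;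
  Ow : forall x, x < K -> c.2 (O + x) = w x;
  Odone : forall x, j < x <= K -> c.2 x = w (x - 1) }.

Lemma P10 m : m 4 = K -> m 5 = 1 -> m 12 = O -> (forall x, x < K -> m (O + x) = w x) ->
  w 0 = m O ->
  exists c', runs Prog (118, m) c' 9 /\ InvO K c'.
Proof.
move=> h4 h5 h12 hw hw0.
eexists; split.
  eapply runs_weak; last first; [do 9 go; exact: runs_refl | by []].
constructor => //=; try (by msimp); try (msimp; lia).
move=> x hx; msimp; exact: hw.
Qed.

Record InvF0 (c : config) : Prop := {
  F0pc : c.1 = 135;
  F05 : c.2 5 = 1;
  F012 : c.2 12 = O;
  F0m1 : c.2 (O - 1) = K;
  F0m2 : c.2 (O - 2) = w 0;
  F0w : forall x, x < K -> c.2 (O + x) = w x;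
  F0done : forall x, 16 < x <= K -> c.2 x = w (x - 1) }.

Lemma P11 c : InvO K c -> exists c', runs Prog c c' (K.+1 * 8) /\ InvF0 c'.
Proof.
move=> H; apply: (runs_loop (Inv := InvO) (Post := InvF0) (s := 8)) H.
move=> j [pc m] [/= hpc hj h7 h8 h5 h12 hm1 hm2 hw hd]; subst pc.
case: (leqP j 16) => hj16.
{ left; eexists; split.
    eapply runs_weak; last first; [do 3 go; exact: runs_refl | by []].
  constructor => //=; try (by msimp); try (msimp; lia).
  all: try (by move=> x hx; msimp; apply: hw).
  all: move=> x hx; msimp; apply: hd; lia. }
{ have hwj : m (O - 1 + j) = w (j - 1).
    rewrite (_ : O - 1 + j = O + (j - 1)); last lia.
    apply: hw; lia.
  right; eexists; exists j.-1; split; first lia; split.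
    eapply runs_weak; last first; [do 8 go; exact: runs_refl | by []].
  constructor => //=; try (by msimp); try (msimp; lia).
  all: try (by move=> x hx; msimp; apply: hw).
  all: move=> x hx; msimp; case: (eqVneq x j) => [->|ne].
  all: rewrite ?eqxx //.
  all: rewrite ?(negbTE ne).
  all: apply: hd; lia. }
Qed.

Lemma fin_blk k m : k < 15 -> m 1 = O - 1 - 1 ->
  runs Prog (137 + 3*k, m)
    (140 + 3*k, upd (upd (upd m 0 (17 - k)) 0 (17 - k + (O - 1 - 1))) (16 - k) (m (17 - k + (O - 1 - 1)))) 3.
Proof.
move=> hk h1.
do 15 (case: k hk => [_|k hk]; [eapply runs_weak; last first; [do 3 go; exact: runs_refl | by []]|]); by [].
Qed.

Record InvF (mu : nat) (c : config) : Prop := {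
  Fmu : mu <= 15;
  Fpc : c.1 = 137 + 3 * (15 - mu);
  F1 : c.2 1 = O - 1 - 1;
  Fm1 : c.2 (O - 1) = K;
  Fm2 : c.2 (O - 2) = w 0;
  Fw : forall x, x < K -> c.2 (O + x) = w x;
  Fd16 : forall x, 16 < x <= K -> c.2 x = w (x - 1);
  Fdone : forall x, mu.+1 < x <= 16 -> x <= K -> c.2 x = w (x - 1) }.

Lemma P12a c : InvF0 c -> exists c', runs Prog c c' 2 /\ InvF 15 c'.
Proof.
case: c => pc m [/= hpc h5 h12 hm1 hm2 hw hd]; subst pc.
eexists; split.
  eapply runs_weak; last first; [do 2 go; exact: runs_refl | by []].
constructor => //=; try (by msimp); try (msimp; lia).
all: try (by move=> x hx; msimp; apply: hw).
all: try (by move=> x hx; msimp; apply: hd).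
all: try (by move=> x; lia).
Qed.

Lemma P12b c : InvF 15 c -> exists c', runs Prog c c' 48 /\ InvF 0 c'.
Proof.
move=> H; apply: (runs_loop (Inv := InvF) (Post := InvF 0) (s := 3)) H => mu [pc m] I.
case: mu I => [|mu] I; first by left; exists (pc, m); split=> //; apply: runs_weak (runs_refl _ _).
right; have [/= hmu hpc h1 hm1 hm2 hw hd16 hd] := I.
have hl : m (17 - (15 - mu.+1) + (O - 1 - 1)) = if mu.+2 <= K then w mu.+1 else m (O + mu.+1).
  rewrite (_ : 17 - (15 - mu.+1) + (O - 1 - 1) = O + mu.+1); last lia.
  by case: ifP => // hk; apply: hw; lia.
eexists (_, _), mu; split=> //; split.
  rewrite hpc; apply: fin_blk => //; lia.
have e1 : 16 - (15 - mu.+1) = mu.+2 by lia.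
rewrite e1 hl.
constructor => //=; try lia; try (by msimp).
all: try (by move=> x hx; msimp; apply: hw).
all: try (by move=> x hx; msimp; apply: hd16).
all: move=> x hx hxK; msimp; case: (eqVneq x mu.+2) => [ex|ne].
all: try (by rewrite ex; rewrite ex in hxK; rewrite hxK).
all: rewrite ?(negbTE ne).
all: apply: hd => //; lia.
Qed.

Lemma P12c c : InvF 0 c -> exists m', runs Prog c (186, m') 4 /\
  m' 0 = K /\ forall j, j < K -> m' j.+1 = w j.
Proof.
case: c => pc m [/= _ hpc h1 hm1 hm2 hw hd16 hd]; subst pc.
eexists; split.
  eapply runs_weak; last first; [do 4 go; exact: runs_refl | by []].
split; first by msimp.
move=> j hj; msimp.
case: (eqVneq j 0) => [ej|nj]; first by rewrite ej.
have -> : (j.+1 == 1) = false by apply/eqP; lia.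
case: (leqP j 15) => hj15.
  by rewrite hd; [rewrite subn1 | lia | lia].
by rewrite hd16; [rewrite subn1 | lia].
Qed.

End Out.

Lemma selst_g th r0 i : selst th r0 i = gsel (fun j => tv j) th r0 i.
Proof. by []. Qed.
Lemma hc_g i t : hc i t = gh (fun j => tv j) i t.
Proof. by []. Qed.
Lemma cgt_g t : cgt t = ggt (fun j => tv j) n t.
Proof. by []. Qed.

Lemma run_main : exists m' th b, b <= 200 * n + 200 /\ runs Prog (0, m0) (186, m') b /\
  m' 0 = K /\ (forall j, j < K -> m' j.+1 = nth 0 (selst th (K - cgt th) n).2 j) /\
  size (selst th (K - cgt th) n).2 = K /\ uniq (selst th (K - cgt th) n).2 /\
  (forall x, (x \in (selst th (K - cgt th) n).2) =
       (x < n) && ((th < tv x) || ((tv x == th) && (hc x th < K - cgt th)))).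
Proof.
have [c1 [r1 i1]] := P0.
have [c2 [r2 i2]] := P1 i1.
have [c3 [r3 i3]] := P2 i2.
have [c4 [r4 i4]] := P3 i3.
have [c5 [r5 i5]] := P4 i4.
have [c6 [r6 i6]] := P5 i5.
have [c7 [r7 i7]] := P6 i6.
have [c8 [r8 [th i8]]] := P7 i7.
have [c9 [r9 i9]] := P8 i8.
have [c10 [r10 i10]] := P9 i9.
case: c10 r10 i10 => pc10 mE r10 i10.
have [/= hpc e4 e5 e12 eout] := i10; subst pc10.
have [_ tn _ _ _ k1 k2 _ _ _ _ _ _] := i8.
have [g1 g2 g3 g4] := gsel_inv (fun j => tv j) th (K - cgt th) n.
have g2' : size (selst th (K - cgt th) n).2 = cgt th + minn (K - cgt th) (hc n th) := g2.
have sz : size (selst th (K - cgt th) n).2 = K by rewrite g2'; lia.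
pose w := fun x => mE (O + x).
have w0 : w 0 = mE O by rewrite /w addn0.
have [c11 [r11 i11]] := P10 (w := w) e4 e5 e12 (fun x _ => erefl) w0.
have [c12 [r12 i12]] := P11 i11.
have [c13 [r13 i13]] := P12a i12.
have [c14 [r14 i14]] := P12b i13.
have [m' [r15 [f1 f2]]] := P12c i14.
exists m', th; eexists; split; last split.
  2: do 14 (apply: runs_trans; first eassumption); exact: r15.
  have : K <= n by lia.
  lia.
split=> //; split; last by split => //; split => //; exact: g3.
move=> j hj; rewrite f2 // /w eout //; lia.
Qed.

End Main.

Lemma m0_tI n beta (tI tE : 'I_n -> nat) (x : 'I_n) : init_mem n beta tI tE (2 + x) = tI x.
Proof.
rewrite /init_mem /= addKn ltn_ord.
by rewrite codomE (nth_map x) ?nth_ord_enum // size_enum_ord.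
Qed.

Lemma card_nbhd n (v : 'I_n) : #|nbhd (Kn_adj n) v| = n.-1.
Proof.
have := cardsC1 v; rewrite card_ord => <-; apply: eq_card => u.
by rewrite !inE /Kn_adj eq_sym.
Qed.

Theorem theorem5 :
  exists (P : seq instr) (c : nat),
    forall (n beta : nat) (tI tE : 'I_n -> nat),
      valid_thresholds (Kn_adj n) tI tE ->
      let fin := exec P (c * n + c) (0, init_mem n beta tI tE) in
      halted P fin /\
      MES_optimal (Kn_adj n) tI tE beta (output_set n fin.2).
Proof.
exists Prog, 200 => n beta tI tE hv fin.
case: (posnP n) => hn.
  subst n.
  have -> : fin = (186, init_mem 0 beta tI tE).
    by rewrite /fin (_ : 200 * 0 + 200 = 1 + 199) // exec_add /= exec_halted.
  split => //; apply: opt => //.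
    apply/eqP; rewrite minn0 cards_eq0; apply/eqP/setP => x; case: x => //.
  by move=> x; case: x.
have tvn : forall i, i < n -> init_mem n beta tI tE (2 + i) <= n.
  move=> i hi; rewrite (m0_tI _ _ _ (Ordinal hi)).
  have [h1 h2] := hv (Ordinal hi); rewrite card_nbhd in h2; lia.
have [m' [th [b [hb [[t [ht ex]] [f0 [f1 [sz [uo mem]]]]]]]]] := run_main hn tvn.
have -> : fin = (186, m').
  rewrite /fin (_ : 200 * n + 200 = t + (200 * n + 200 - t)); last lia.
  by rewrite exec_add ex exec_halted.
split => //=.
set out := (selst beta tI tE th (minn beta n - cgt beta tI tE th) n).2 in f1 sz uo mem.
have hS : output_set n m' = [set x in pmap insub out].
  apply/setP => x; rewrite !inE mem_pmap_sub; apply/existsP/idP.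
    case=> j /eqP hj; have -> : val x = m' j.+1 by rewrite hj.
    rewrite f1; last by rewrite -f0.
    by apply: mem_nth; rewrite sz -f0.
  move=> hx.
  have hi : index (val x) out < m' 0 by rewrite f0 -sz index_mem.
  exists (Ordinal hi); apply/eqP => /=.
  by rewrite f1; [rewrite nth_index | rewrite -f0].
have uo' : uniq (pmap insub out : seq 'I_n) := pmap_sub_uniq _ uo.
rewrite hS; apply: opt => //.
  rewrite cardsE (card_uniqP uo') size_pmap_sub.
  have : count (fun x => x < n) out = size out.
    apply/eqP; rewrite -all_count; apply/allP => x; rewrite mem => /andP[] //.
  by move=> ->.
move=> x y; rewrite !inE !mem_pmap_sub !mem => /andP[_ hx] /negP hy.
rewrite -(@m0_tI n beta tI tE x) -(@m0_tI n beta tI tE y).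
case: (leqP (init_mem n beta tI tE (2 + y)) th) => hyt.
  change (\val x) with (nat_of_ord x) in hx; change (\val y) with (nat_of_ord y) in hyt.
  case/orP: hx => [hx|/andP[/eqP hx _]]; lia.
exfalso; apply: hy; change (\val y) with (nat_of_ord y); by rewrite ltn_ord hyt.
Qed.
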